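(* Let $\Phi = \{\xi = (\tau_L,\delta_L,\tau_R,\delta_R) \in \mathbb{R}^4 : \tau_L > |\delta_L + 1|,\ \tau_R < -|\delta_R+1|\}$ and $\Phi^{(3)} = \{\xi \in \Phi : \delta_L > 0, \delta_R < 0\}$. Let $\alpha(\xi) = \tau_L\tau_R + (\delta_L-1)(\delta_R-1)$ and $g(\xi) = (\tau_R^2 - 2\delta_R,\ \delta_R^2,\ \tau_L\tau_R - \delta_L - \delta_R,\ \delta_L\delta_R)$. For $\xi \in \Phi$ let $\lambda_L^u>1$ be the eigenvalue of $\begin{bmatrix}\tau_L & 1\\ -\delta_L & 0\end{bmatrix}$ of modulus greater than one, $\lambda_R^u<-1$ the eigenvalue of $\begin{bmatrix}\tau_R & 1\\ -\delta_R & 0\end{bmatrix}$ of modulus greater than one, and $$\phi^+(\xi) = \delta_R - \big(\tau_R + \delta_L + \delta_R - (1+\tau_R)\lambda_L^u\big)\lambda_L^u,\qquad \phi^-(\xi) = \delta_R - \big(\delta_R + \tau_R - (1+\lambda_R^u)\lambda_L^u\big)\lambda_L^u,$$ $\phi_{\min}(\xi) = \min[\phi^+(\xi),\phi^-(\xi)]$. For $n \ge 0$ define $$\mathcal{R}^{(3)}_n = \{\xi \in \Phi^{(3)} : \phi_{\min}(g^n(\xi)) > 0,\ \phi_{\min}(g^{n+1}(\xi)) \le 0,\ \alpha(\xi) < 0\}.$$ If $\xi \in \mathcal{R}^{(3)}_n$ with $n \ge 1$, then $g(\xi) \in \mathcal{R}^{(3)}_{n-1}$.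
   Context: $g^n$ denotes the $n$-fold composition of $g$; the conditions in the set definitions are understood to include that the relevant iterates $g^k(\xi)$ lie in $\Phi$, so that $\phi_{\min}$ is defined at them. *)

(* Defs.v *)
From Stdlib Require Import Reals Lra ClassicalEpsilon.
Open Scope R_scope.

Record xi4 : Type := mkXi { tauL : R; deltaL : R; tauR : R; deltaR : R }.

Definition inPhi (x : xi4) : Prop :=
  tauL x > Rabs (deltaL x + 1) /\ tauR x < - Rabs (deltaR x + 1).

Definition inPhi3 (x : xi4) : Prop :=
  inPhi x /\ deltaL x > 0 /\ deltaR x < 0.

Definition alpha (x : xi4) : R :=
  tauL x * tauR x + (deltaL x - 1) * (deltaR x - 1).

Definition g (x : xi4) : xi4 :=
  mkXi (tauR x ^ 2 - 2 * deltaR x) (deltaR x ^ 2)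
       (tauL x * tauR x - deltaL x - deltaR x) (deltaL x * deltaR x).

(* lam is an eigenvalue of [[tau, 1], [-delta, 0]]:
   det([[tau,1],[-delta,0]] - lam I) = 0. *)
Definition is_eig (tau delta lam : R) : Prop :=
  (tau - lam) * (0 - lam) - 1 * (- delta) = 0.

Lemma R_inhabited : inhabited R.
Proof. exact (inhabits 0). Qed.

(* the eigenvalue of modulus greater than one (unique for x in Phi) *)
Definition lamLu (x : xi4) : R :=
  epsilon R_inhabited (fun l => is_eig (tauL x) (deltaL x) l /\ Rabs l > 1).

Definition lamRu (x : xi4) : R :=
  epsilon R_inhabited (fun l => is_eig (tauR x) (deltaR x) l /\ Rabs l > 1).

Definition phi_plus (x : xi4) : R :=
  deltaR x - (tauR x + deltaL x + deltaR x - (1 + tauR x) * lamLu x) * lamLu x.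

Definition phi_minus (x : xi4) : R :=
  deltaR x - (deltaR x + tauR x - (1 + lamRu x) * lamLu x) * lamLu x.

Definition phi_min (x : xi4) : R := Rmin (phi_plus x) (phi_minus x).

Definition giter (n : nat) (x : xi4) : xi4 := Nat.iter n g x.

(* R^(3)_n; membership of the relevant iterates in Phi is made explicit *)
Definition Rn3 (n : nat) (x : xi4) : Prop :=
  inPhi3 x /\
  inPhi (giter n x) /\ phi_min (giter n x) > 0 /\
  inPhi (giter (S n) x) /\ phi_min (giter (S n) x) <= 0 /\
  alpha x < 0.

(* Main.v *)
Require Import Defs.
From Stdlib Require Import Reals.
From Stdlib Require Import Lra Psatz.
Open Scope R_scope.

Lemma giter_shift (m : nat) (x : xi4) : giter m (g x) = giter (S m) x.
Proof.
  unfold giter. induction m as [|m IH]; simpl; [reflexivity|].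
  simpl in IH. rewrite IH. reflexivity.
Qed.

Lemma key_alg (tL dL tR dR : R) :
  dL > 0 -> dR < 0 -> tL > Rabs (dL + 1) -> tR < - Rabs (dR + 1) ->
  tL*tR + (dL-1)*(dR-1) < 0 ->
  inPhi3 (g (mkXi tL dL tR dR)) /\ alpha (g (mkXi tL dL tR dR)) < 0.
Proof.
  intros HdL HdR HtL HtR Ha.
  assert (H1 : tL > dL + 1) by (rewrite Rabs_right in HtL; lra).
  assert (H2 : tR < -(dR+1)) by (pose proof (Rle_abs (dR+1)); lra).
  assert (H3 : tR < dR+1) by (pose proof (Rabs_Ropp (dR+1)); pose proof (Rle_abs (-(dR+1))); lra).
  assert (Ht : 0 < -tR) by (pose proof (Rabs_pos (dR+1)); lra).
  assert (HtL0 : 0 < tL) by lra.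
  assert (HL2 : tR^2 - 2*dR > dR^2 + 1).
  { assert (tR^2 > (dR+1)^2).
    { destruct (Rle_or_lt 0 (dR+1)).
      - nra.
      - nra. }
    nra. }
  assert (HX1 : -(tL*tR - dL - dR) > dL*dR + 1) by nra.
  assert (HX2 : -(tL*tR - dL - dR) > -(dL*dR + 1)).
  { assert (tL * (-tR) > (dL+1)*(-(dR+1))) by nra. nra. }
  assert (HX3 : -(tL*tR - dL - dR) > (dL+1)*(dR+1) + dL + dR).
  { assert (tL * (-tR) > (dL+1)*(dR+1)) by nra. nra. }
  split.
  - unfold inPhi3, inPhi; simpl. split; [split|split].
    + rewrite Rabs_right by nra. nra.
    + destruct (Rle_or_lt 0 (dL*dR+1)).
      * rewrite Rabs_right by lra. lra.
      * rewrite Rabs_left by lra. lra.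
    + nra.
    + nra.
  - unfold alpha, g; cbn [tauL deltaL tauR deltaR].
    set (X := -(tL*tR - dL - dR)) in *.
    set (T := tR^2 - 2*dR) in *.
    replace (T * (tL*tR - dL - dR)) with (- (T * X)) by (unfold X; ring).
    assert (HX0 : X > 0) by (destruct (Rle_or_lt 0 (dL*dR+1)); lra).
    destruct (Rle_or_lt dL (-dR)).
    + assert (T * X >= (dR^2+1) * X) by nra.
      assert ((dR^2+1) * X > (dR^2+1)*(dL*dR+1)) by nra.
      assert (dR*(dR+dL) >= 0) by nra.
      assert (E : (dR^2-1)*(dL*dR-1) - (dR^2+1)*(dL*dR+1) = -2*(dR*(dR+dL))) by ring.
      lra.
    + assert (T * X >= (dR^2+1) * X) by nra.
      assert ((dR^2+1) * X > (dR^2+1)*((dL+1)*(dR+1) + dL + dR)) by nra.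
      assert (dR^2 + dR + 1 > 0) by nra.
      assert ((dL+dR)*(dR^2 + dR + 1) > 0) by nra.
      assert (E : (dR^2-1)*(dL*dR-1) - (dR^2+1)*((dL+1)*(dR+1) + dL + dR) = -2*((dL+dR)*(dR^2 + dR + 1))) by ring.
      lra.
Qed.

Theorem proposition8p1 (n : nat) (x : xi4) :
  (1 <= n)%nat -> Rn3 n x -> Rn3 (n - 1) (g x).
Proof.
  intros Hn [[[HtL HtR] [HdL HdR]] [P1 [P2 [P3 [P4 Ha]]]]].
  destruct n as [|m]; [inversion Hn|].
  replace (S m - 1)%nat with m by (simpl; lia).
  destruct x as [tL dL tR dR]. simpl in *.
  destruct (key_alg tL dL tR dR HdL HdR HtL HtR Ha) as [K1 K2].
  unfold Rn3. rewrite !giter_shift.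
  unfold giter in *; simpl Nat.iter in *; tauto.
Qed.
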